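(* If $0\le p\le\frac12<t\le1$, then bold play is optimal, i.e. $\pi(p,t)=p$.
   Context: Let $\beta_1,\beta_2,\ldots$ be independent Bernoulli random variables with success probability $p$. A stake sequence is a sequence $\gamma=(c_1,c_2,\ldots)$ of non-negative reals with $c_1\ge c_2\ge\cdots$ and $\sum_i c_i=1$; write $S_\gamma=\sum_i c_i\beta_i$. For $0\le p\le t\le 1$ define $\pi(p,t)=\sup\{\mathbf P(S_\gamma\ge t)\mid \gamma \text{ a stake sequence}\}$. Bold play for threshold $t$ is the stake sequence with $c_i=\frac1m$ for $i\le m$ and $c_i=0$ for $i>m$, where $m=\lfloor 1/t\rfloor$; it is optimal if it attains $\pi(p,t)$. For $t>\frac12$ bold play is $c_1=1$, with success probability $p$. *)

(* Defs.v *)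
From HB Require Import structures.
From mathcomp Require Import all_boot all_order all_algebra.
From mathcomp Require Import all_classical all_reals all_analysis.
Set Implicit Arguments. Unset Strict Implicit. Unset Printing Implicit Defensive.
Import Order.TTheory GRing.Theory Num.Theory.
Import numFieldNormedType.Exports.
Local Open Scope classical_set_scope.
Local Open Scope ring_scope.

(* A sequence of independent Bernoulli(p) random variables (valued in bool,
   true = success) on a probability space P: each event {beta i} is
   measurable with probability p, and the events are mutually independent:
   for every finite set of indices I (a duplicate-free list) and every pattern b of outcomes,
   P(/\_{i in I} beta i = b i) = prod_{i in I} P(beta i = b i). *)
Definition iid_bernoulli {R : realType} {d : measure_display}
  {T : measurableType d} (P : probability T R) (p : R) (beta : nat -> T -> bool) : Prop :=
  (forall i, measurable [set w | beta i w]) /\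
  (forall i, P [set w | beta i w] = p%:E) /\
  (forall (I : seq nat) (b : nat -> bool), uniq I ->
      P (\bigcap_(i in [set` I]) [set w | beta i w = b i])
      = (\prod_(i <- I) P [set w | beta i w = b i])%E).

Definition stake_seq {R : realType} (c : nat -> R) : Prop :=
  (forall i, 0 <= c i) /\ (forall i, c i.+1 <= c i) /\ (series c @ \oo --> (1 : R)).

Definition S_gamma {R : realType} {T : Type} (beta : nat -> T -> bool)
  (c : nat -> R) (w : T) : R :=
  limn (series (fun i => c i * (beta i w)%:R)).

Definition pi_opt {R : realType} {d : measure_display} {T : measurableType d}
  (P : probability T R) (beta : nat -> T -> bool) (t : R) : \bar R :=
  ereal_sup [set P [set w | t <= S_gamma beta c w] | c in @stake_seq R].

(* Main.v *)
Require Import Defs.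
From HB Require Import structures.
From mathcomp Require Import all_boot all_order all_algebra.
From mathcomp Require Import all_classical all_reals all_analysis.
From mathcomp Require Import measurable_realfun ring lra.
Import Order.TTheory GRing.Theory Num.Theory.
Import numFieldNormedType.Exports.
Local Open Scope classical_set_scope.
Local Open Scope ring_scope.

Fixpoint pats (n : nat) : seq (seq bool) :=
  if n is n'.+1 then [seq true :: x | x <- pats n'] ++ [seq false :: x | x <- pats n']
  else [:: [::]].

Section Comb.
Variable R : realType.

Definition sval (cs : seq R) (bs : seq bool) : R :=
  \sum_(i < size cs) cs`_i * (nth false bs i)%:R.
Definition wt (p : R) (bs : seq bool) : R := \prod_(b <- bs) (if b then p else 1 - p).
Definition gf (p : R) (cs : seq R) (s : R) : R :=
  \sum_(bs <- pats (size cs)) ((s <= sval cs bs)%R)%:R * wt p bs.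

Lemma gf_nil p s : gf p [::] s = ((s <= 0)%R)%:R.
Proof. by rewrite /gf /= big_seq1 /wt big_nil mulr1 /sval big_ord0. Qed.

Lemma sval_cons c cs b bs : sval (c :: cs) (b :: bs) = c * b%:R + sval cs bs.
Proof. by rewrite /sval /= big_ord_recl. Qed.

Lemma gf_cons p c cs s :
  gf p (c :: cs) s = p * gf p cs (s - c) + (1 - p) * gf p cs s.
Proof.
rewrite /gf /= big_cat !big_map !big_distrr /=; congr (_ + _);
  apply: eq_bigr => bs _; rewrite sval_cons /wt big_cons /=.
  by rewrite mulr1 lerBlDl mulrCA.
by rewrite mulr0 add0r mulrCA.
Qed.

Lemma wt_ge0 p bs : 0 <= p <= 1 -> 0 <= wt p bs.
Proof.
move=> /andP[p0 p1]; rewrite /wt; apply: prodr_ge0 => -[] _ //.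
by rewrite subr_ge0.
Qed.

Lemma gf_ge0 p cs s : 0 <= p <= 1 -> 0 <= gf p cs s.
Proof. by move=> hp; apply: sumr_ge0 => bs _; rewrite mulr_ge0 ?wt_ge0. Qed.

Lemma gf_anti p cs s1 s2 : 0 <= p <= 1 -> s1 <= s2 -> gf p cs s2 <= gf p cs s1.
Proof.
move=> hp h; apply: ler_sum => bs _; apply: ler_wpM2r; first exact: wt_ge0.
case: (lerP s2 (sval cs bs)) => h2; last by rewrite ler0n.
by rewrite (le_trans h h2).
Qed.

Lemma gf_half cs : forall s s', \sum_(c <- cs) c < s + s' ->
  gf (1/2) cs s + gf (1/2) cs s' <= 1.
Proof.
elim: cs => [|c cs IH] s s'.
  rewrite big_nil !gf_nil => h.
  case: (lerP s 0) => h1; case: (lerP s' 0) => h2; rewrite /= ?mulr1n ?mulr0n; lra.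
rewrite big_cons => h; rewrite !gf_cons.
have e : (1 - 1/2 : R) = 1/2 by lra.
rewrite e.
have h1 := IH (s - c) s'; have h2 := IH s (s' - c).
have : gf (1 / 2) cs (s - c) + gf (1 / 2) cs s' <= 1 by apply: h1; lra.
have : gf (1 / 2) cs s + gf (1 / 2) cs (s' - c) <= 1 by apply: h2; lra.
lra.
Qed.

Lemma gf_zero cs : forall s, 0 < s -> gf 0 cs s = 0.
Proof.
elim: cs => [|c cs IH] s hs; first by rewrite gf_nil leNgt hs.
by rewrite gf_cons mul0r add0r subr0 mul1r IH.
Qed.

Lemma key_ineq {a b k : R} : 0 <= b -> b <= a -> 1 <= k ->
  (1/2)`^k * a`^k + (1 - (1/2)`^k) * b`^k <= ((a+b)/2)`^k.
Proof.
move=> b0 ba k1.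
have k0 : k != 0 by apply/negP => /eqP k0; move: k1; rewrite k0; lra.
have [a0|a0] := eqVneq a 0.
  have b00 : b = 0 by apply/eqP; rewrite eq_le b0 -a0 ba.
  by rewrite a0 b00 addr0 mul0r !powR0 // !mulr0 addr0.
have apos : 0 < a by rewrite lt_neqAle eq_sym a0 (le_trans b0 ba).
set m := (a + b) / 2.
have mpos : 0 < m by rewrite /m; lra.
set tau := (a - b) / (a + b).
have tau0 : 0 <= tau by rewrite /tau divr_ge0 //; lra.
have tau1 : tau <= 1 by rewrite /tau ler_pdivrMr; lra.
have hc := @convex_powR R k k1 (Itv01 tau0 tau1).
have ha : tau * (2 * m) + (1 - tau) * m = a.
  rewrite /tau /m; field; lra.
have hb : tau * 0 + (1 - tau) * m = b.
  rewrite /tau /m; field; lra.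
have Ha := hc (2 * m) m.
rewrite !inE /= !in_itv /= !andbT in Ha.
have {Ha} Ha := Ha ltac:(lra) ltac:(lra).
rewrite [X in X `^ k <= _]convRE convRE /= /unstable.onem ha in Ha.
have Hb := hc 0 m.
rewrite !inE /= !in_itv /= !andbT in Hb.
have {Hb} Hb := Hb ltac:(lra) ltac:(lra).
rewrite [X in X `^ k <= _]convRE convRE /= /unstable.onem hb powR0 // mulr0 add0r in Hb.
rewrite /= in Ha Hb.
rewrite powRM in Ha; [|lra|lra].
have pY : (1/2 : R)`^k * 2`^k = 1.
  rewrite -powRM; [|lra|lra].
  have -> : (1/2 * 2 : R) = 1 by lra.
  by rewrite powR1.
set X := m `^ k in Ha Hb *; set Y := 2 `^ k in Ha pY; set p := (1/2)`^k in pY *.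
have p0 : 0 <= p by apply: powR_ge0.
have e1 : (1:R) `^ k = 1 by rewrite powR1.
have p1 : p <= 1 by rewrite /p -[leRHS]e1; apply: ge0_ler_powR; rewrite ?nnegrE; lra.
apply: (@le_trans _ _ (p * (tau * (Y * X) + (1 - tau) * X) + (1 - p) * ((1 - tau) * X))).
  apply: lerD; apply: ler_wpM2l => //; lra.
have -> : p * (tau * (Y * X) + (1 - tau) * X) + (1 - p) * ((1 - tau) * X)
   = X + tau * X * (p * Y - 1) by ring.
by rewrite pY subrr mulr0 addr0.
Qed.


Lemma gf_pow p k cs : (forall c, c \in cs -> 0 <= c) -> 1 <= k -> p = (1/2)`^k ->
  forall s, gf p cs s <= (gf (1/2) cs s)`^k.
Proof.
move=> hc k1 hp.
have k0 : k != 0 by apply/negP => /eqP k0; move: k1; rewrite k0; lra.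
have p0 : 0 <= p by rewrite hp powR_ge0.
have e1 : (1:R) `^ k = 1 by rewrite powR1.
have p1 : p <= 1 by rewrite hp -[leRHS]e1; apply: ge0_ler_powR; rewrite ?nnegrE; lra.
have hh : 0 <= (1/2 : R) <= 1 by apply/andP; split; lra.
elim: cs hc => [|c cs IH] hc s.
  rewrite !gf_nil; case: (lerP s 0) => _ /=; first by rewrite e1.
  by rewrite powR0.
have c0 : 0 <= c by apply: hc; rewrite inE eqxx.
have {}IH := IH (fun x hx => hc x ltac:(by rewrite inE hx orbT)).
rewrite !gf_cons.
apply: (@le_trans _ _ (p * (gf (1/2) cs (s - c))`^k + (1 - p) * (gf (1/2) cs s)`^k)).
  apply: lerD; apply: ler_wpM2l => //; lra.
have ab : gf (1/2) cs s <= gf (1/2) cs (s - c) by apply: gf_anti => //; lra.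
have := key_ineq (gf_ge0 (1/2) cs s hh) ab k1.
rewrite -hp.
have -> : (gf (1 / 2) cs (s - c) + gf (1 / 2) cs s) / 2 =
  1 / 2 * gf (1 / 2) cs (s - c) + (1 - 1 / 2) * gf (1 / 2) cs s by field.
by [].
Qed.

Lemma gf_bound p cs s : 0 <= p -> p <= 1/2 -> (forall c, c \in cs -> 0 <= c) ->
  \sum_(c <- cs) c < 2 * s -> 0 < s -> gf p cs s <= p.
Proof.
move=> p0 ph hc hs s0.
have [->|pn0] := eqVneq p 0; first by rewrite gf_zero.
have ppos : 0 < p by rewrite lt_neqAle eq_sym pn0 p0.
have hpos : (0 : R) < 1/2 by lra.
have lnh : ln (1/2 : R) < 0 by rewrite ln_lt0 //; apply/andP; split; lra.
set k := ln p / ln (1/2 : R).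
have k1 : 1 <= k.
  rewrite /k ler_ndivlMr // !mul1r ler_ln ?posrE //; rewrite ?invr_gt0; lra.
have hk : p = (1/2)`^k.
  rewrite /powR ifF; last by apply/negbTE; lra.
  by rewrite /k mulfVK ?lnK ?posrE // lt_eqF.
have hh : 0 <= (1/2 : R) <= 1 by apply/andP; split; lra.
apply: (le_trans (gf_pow _ _ _ hc k1 hk s)).
rewrite hk; apply: ge0_ler_powR; rewrite ?nnegrE ?gf_ge0 //; first lra.
have := gf_half cs s s ltac:(lra); lra.
Qed.

End Comb.
Arguments wt {R}.
Arguments gf {R}.
Arguments sval {R}.

Definition pat {T : Type} (beta : nat -> T -> bool) n w := [seq beta i w | i <- iota 0 n].

Lemma pats_mem n bs : (bs \in pats n) = (size bs == n).
Proof.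
elim: n bs => [|n IH] [|b bs] //=.
  by rewrite mem_cat; apply/norP; split; apply/mapP => -[].
have inj (b' : bool) : injective (cons b') by move=> x y [].
have hF b' : (b :: bs \in [seq b' :: x | x <- pats n]) = (b == b') && (bs \in pats n).
  apply/mapP/andP => [[x hx [-> ->]]|[/eqP -> h]]; first by rewrite eqxx.
  by exists bs.
rewrite mem_cat !hF IH; clear hF; by case: b; rewrite /= ?orbF.
Qed.

Lemma pats_uniq n : uniq (pats n).
Proof.
elim: n => [|n IH] //=.
have inj (b' : bool) : injective (cons b') by move=> x y [].
rewrite cat_uniq !(map_inj_uniq (inj _)) IH /= andbT.
by apply/hasP => -[x /mapP [y _ ->]] /mapP [z _].
Qed.

Lemma pat_size {T : Type} (beta : nat -> T -> bool) n w : size (pat beta n w) = n.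
Proof. by rewrite size_map size_iota. Qed.

Lemma mbeta {R : realType} {d : measure_display} {T : measurableType d}
  {P : probability T R} {p beta} : iid_bernoulli P p beta ->
  forall i b, measurable [set w | beta i w = b].
Proof.
move=> [h1 [h2 h3]] i []; first exact: h1.
rewrite (_ : [set w | beta i w = false] = ~` [set w | beta i w]); first exact/measurableC/h1.
by apply/seteqP; split => w /=; case: (beta i w).
Qed.

Lemma Pbeta {R : realType} {d : measure_display} {T : measurableType d}
  {P : probability T R} {p beta} : iid_bernoulli P p beta ->
  forall i b, P [set w | beta i w = b] = (if b then p else 1 - p)%:E.
Proof.
move=> [h1 [h2 h3]] i [] //; first exact: h2.
rewrite (_ : [set w | beta i w = false] = ~` [set w | beta i w]); last first.
  by apply/seteqP; split => w /=; case: (beta i w).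
by rewrite probability_setC // h2 EFinB.
Qed.

Lemma pat_eq {T : Type} (beta : nat -> T -> bool) n bs : size bs = n ->
  [set w | pat beta n w = bs] =
  \bigcap_(i in [set` iota 0 n]) [set w | beta i w = nth false bs i].
Proof.
move=> hs; apply/seteqP; split => w /=.
  move=> <- i /=; rewrite mem_iota add0n => /andP[_ hi].
  by rewrite (nth_map 0) ?size_iota // nth_iota.
move=> h; apply: (@eq_from_nth _ false); first by rewrite pat_size hs.
move=> i; rewrite pat_size => hi.
rewrite (nth_map 0) ?size_iota // nth_iota // add0n; apply: h.
by rewrite /= mem_iota add0n hi.
Qed.

Lemma mpat {R : realType} {d : measure_display} {T : measurableType d}
  {P : probability T R} {p beta} : iid_bernoulli P p beta ->
  forall n bs, measurable [set w | pat beta n w = bs].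
Proof.
move=> hi n bs; have [hs|hs] := eqVneq (size bs) n.
  rewrite pat_eq //; apply: bigcap_measurableType => i _; exact: mbeta hi _ _.
rewrite (_ : [set w | pat beta n w = bs] = set0) //; apply/seteqP; split => w //= hw.
by move: hs; rewrite -hw pat_size eqxx.
Qed.

Lemma Ppat {R : realType} {d : measure_display} {T : measurableType d}
  {P : probability T R} {p beta} : iid_bernoulli P p beta ->
  forall n bs, size bs = n -> P [set w | pat beta n w = bs] = (wt p bs)%:E.
Proof.
move=> hi n bs hs; have hi' := hi; move: hi' => [h1 [h2 h3]].
rewrite pat_eq // h3 ?iota_uniq //.
under eq_bigr => i _ do rewrite (Pbeta hi).
rewrite prodEFin /wt; congr (_%:E).
by rewrite -{2}(mkseq_nth false bs) /mkseq big_map hs.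
Qed.

Lemma mmem {R : realType} {d : measure_display} {T : measurableType d}
  {P : probability T R} {p beta} : iid_bernoulli P p beta ->
  forall n (L : seq (seq bool)), measurable [set w | pat beta n w \in L].
Proof.
move=> hi n; elim => [|b L IH].
  by rewrite (_ : [set w | pat beta n w \in ([::] : seq (seq bool))] = set0) //; apply/seteqP; split => w //=.
rewrite (_ : [set w | pat beta n w \in b :: L] = [set w | pat beta n w = b] `|` [set w | pat beta n w \in L]).
  by apply: measurableU => //; exact: mpat hi _ _.
apply/seteqP; split => w /=; rewrite in_cons.
  by case/orP => [/eqP ->|]; [left|right].
by case => [->|->]; rewrite ?eqxx ?orbT.
Qed.

Lemma Pmem {R : realType} {d : measure_display} {T : measurableType d}
  {P : probability T R} {p beta} : iid_bernoulli P p beta ->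
  forall n (L : seq (seq bool)), uniq L -> all (fun bs => size bs == n) L ->
  P [set w | pat beta n w \in L] = (\sum_(bs <- L) wt p bs)%:E.
Proof.
move=> hi n; elim => [|b L IH].
  move=> _ _; rewrite big_nil (_ : [set w | pat beta n w \in ([::] : seq (seq bool))] = set0) ?measure0 //.
  by apply/seteqP; split => w //=.
move=> /= /andP[bL uL] /andP[/eqP sb aL].
rewrite (_ : [set w | pat beta n w \in b :: L] = [set w | pat beta n w = b] `|` [set w | pat beta n w \in L]).
  rewrite big_cons EFinD -(IH uL aL) -(Ppat hi n b sb); apply: measureU.
  - exact: mpat hi _ _.
  - exact: mmem hi _ _.
  apply/seteqP; split => w //= [-> hb]; by rewrite hb in bL.
apply/seteqP; split => w /=; rewrite in_cons.
  by case/orP => [/eqP ->|]; [left|right].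
by case => [->|->]; rewrite ?eqxx ?orbT.
Qed.

Lemma series_sval {R : realType} {T : Type} (beta : nat -> T -> bool) (c : nat -> R) n w :
  series (fun i => c i * (beta i w)%:R) n = sval (mkseq c n) (pat beta n w).
Proof.
rewrite seriesEnat /= /sval size_mkseq big_mkord; apply: eq_bigr => i _.
by rewrite nth_mkseq // (nth_map 0) ?size_iota // nth_iota.
Qed.

Lemma Eevent {R : realType} {T : Type} (beta : nat -> T -> bool) (c : nat -> R) n s :
  [set w | s <= series (fun i => c i * (beta i w)%:R) n] =
  [set w | pat beta n w \in [seq bs <- pats n | s <= sval (mkseq c n) bs]].
Proof.
by apply/seteqP; split => w /=; rewrite mem_filter pats_mem pat_size eqxx andbT series_sval.
Qed.

Lemma Pevent {R : realType} {d : measure_display} {T : measurableType d}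
  {P : probability T R} {p beta} (hi : iid_bernoulli P p beta) (c : nat -> R) n s :
  P [set w | s <= series (fun i => c i * (beta i w)%:R) n] = (gf p (mkseq c n) s)%:E.
Proof.
rewrite Eevent (Pmem hi) ?filter_uniq ?pats_uniq //; last first.
  by apply/allP => bs; rewrite mem_filter pats_mem => /andP[].
congr EFin; rewrite /gf size_mkseq big_filter big_mkcond /=; apply: eq_bigr => bs _.
by case: ifP => _; rewrite ?mulr1n ?mulr0n ?mul1r ?mul0r.
Qed.

Lemma Mevent {R : realType} {d : measure_display} {T : measurableType d}
  {P : probability T R} {p beta} (hi : iid_bernoulli P p beta) (c : nat -> R) n s :
  measurable [set w | s <= series (fun i => c i * (beta i w)%:R) n].
Proof. by rewrite Eevent; exact: mmem hi _ _. Qed.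

Lemma series_homo {R : realType} (u : nat -> R) : (forall i, 0 <= u i) ->
  {homo series u : n m / (n <= m)%N >-> n <= m}.
Proof.
move=> h n m nm; rewrite !seriesEnat /=.
by apply: (nondecreasing_series (u_ := u) (P := xpredT)) => // k _ _.
Qed.

Lemma stake_le1 {R : realType} (c : nat -> R) : stake_seq c -> forall n, series c n <= 1.
Proof.
move=> [c0 [cd cc]] n.
have := nondecreasing_cvgn_le (series_homo c c0) (cvgP _ cc) n.
by rewrite (cvg_lim (@Rhausdorff R) cc).
Qed.

Lemma u_le {R : realType} (c : R) (b : bool) : 0 <= c -> c * b%:R <= c.
Proof. by move=> c0; case: b; rewrite ?mulr1 ?mulr0. Qed.

Lemma u_ge0 {R : realType} (c : nat -> R) (b : bool) i : 0 <= c i -> 0 <= c i * b%:R.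
Proof. by move=> c0; case: b; rewrite ?mulr1 ?mulr0. Qed.

Lemma su_le {R : realType} {T : Type} (beta : nat -> T -> bool) (c : nat -> R) w m n :
  (forall i, 0 <= c i) -> (n <= m)%N ->
  series (fun i => c i * (beta i w)%:R) m - series (fun i => c i * (beta i w)%:R) n
  <= series c m - series c n.
Proof.
move=> c0 nm; rewrite !sub_series_geq //; apply: ler_sum => i _; exact: u_le.
Qed.

Lemma su_cvg {R : realType} {T : Type} (beta : nat -> T -> bool) (c : nat -> R) w :
  stake_seq c -> cvgn (series (fun i => c i * (beta i w)%:R)).
Proof.
move=> hc; have [c0 _] := hc.
apply: nondecreasing_is_cvgn; first by apply: series_homo => i; exact: u_ge0.
exists 1 => _ [n _ <-].
have e0 (u : nat -> R) : series u 0 = 0 by rewrite seriesEnat /= big_geq.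
have := su_le beta c w n 0 c0 (leq0n n); rewrite !e0 !subr0 => h.
by apply: (le_trans h); apply: stake_le1.
Qed.

Lemma S_le {R : realType} {T : Type} (beta : nat -> T -> bool) (c : nat -> R) w n :
  stake_seq c ->
  S_gamma beta c w <= series (fun i => c i * (beta i w)%:R) n + (1 - series c n).
Proof.
move=> hc; have [c0 _] := hc.
apply: limr_le; first exact: su_cvg.
apply: nearW => m.
have [nm|mn] := leqP n m.
  have := su_le beta c w m n c0 nm; have := stake_le1 c hc m; lra.
have := series_homo (fun i => c i * (beta i w)%:R) (fun i => u_ge0 c (beta i w) i (c0 i)) _ _ (ltnW mn).
have := stake_le1 c hc n; lra.
Qed.

Lemma mS {R : realType} {d : measure_display} {T : measurableType d}
  {P : probability T R} {p beta} (hi : iid_bernoulli P p beta) (c : nat -> R) t :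
  stake_seq c -> measurable [set w | t <= S_gamma beta c w].
Proof.
move=> hc; have hi' := hi; move: hi' => [h1 _].
have mf : measurable_fun setT (S_gamma beta c).
  apply: (@measurable_fun_cvg _ _ _ _ (fun n w => series (fun i => c i * (beta i w)%:R) n)).
    move=> n.
    apply: (eq_measurable_fun (fun w => \sum_(i <- index_iota 0 n) c i * (beta i w)%:R)).
      by move=> w _; rewrite seriesEnat.
    apply: measurable_sum => i.
    apply: (eq_measurable_fun (fun w => c i * \1_[set w | beta i w] w)).
      move=> w _; rewrite indicE; case: (boolP (beta i w)) => h.
        by rewrite mem_set.
      by rewrite memNset ?(negbTE h) //; apply/negP.
    apply: measurable_funM; [exact: measurable_cst | exact: measurable_indic].
  move=> w _; exact: su_cvg.
have := mf measurableT _ (measurable_itv `[t, +oo[); rewrite setTI.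
congr measurable; apply/seteqP; split => w /=; rewrite in_itv /= andbT //.
Qed.

Lemma series_single {R : realType} (f : nat -> R) n :
  (forall k, (0 < k)%N -> f k = 0) -> (0 < n)%N -> series f n = f 0%N.
Proof.
move=> hf hn; rewrite seriesEnat /= big_ltn //.
rewrite big1_seq ?addr0 // => k /andP[_].
by rewrite mem_index_iota => /andP[hk _]; apply: hf.
Qed.

Definition bold {R : realType} : nat -> R := fun i => ((i == 0)%N)%:R.

Lemma bold_stake {R : realType} : stake_seq (@bold R).
Proof.
split; first by move=> i; rewrite /bold ler0n.
split; first by move=> i; rewrite /bold /= ler0n.
apply: cvg_near_cst; exists 1%N => // n /= hn.
by rewrite (series_single _ _ _ hn) // => k; rewrite /bold; case: k.
Qed.

Lemma bold_S {R : realType} {T : Type} (beta : nat -> T -> bool) w :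
  S_gamma beta (@bold R) w = (beta 0%N w)%:R.
Proof.
rewrite /S_gamma; apply: (lim_near_cst (@Rhausdorff R)); exists 1%N => // n /= hn.
by rewrite (series_single _ _ _ hn) /bold ?mul1r // => k; case: k => // k _; rewrite mul0r.
Qed.

Theorem corollary16 (R : realType) (d : measure_display) (T : measurableType d)
  (P : probability T R) (p t : R) (beta : nat -> T -> bool) :
  iid_bernoulli P p beta ->
  0 <= p -> p <= 1 / 2 -> 1 / 2 < t -> t <= 1 ->
  pi_opt P beta t = p%:E.
Proof.
move=> hi p0 ph th t1; have hi' := hi; move: hi' => [h1 [h2 h3]].
apply/eqP; rewrite eq_le; apply/andP; split.
  apply: ge_ereal_sup => _ [c hc <-].
  have hc' := hc; move: hc' => [c0 [cd cc]].
  have e0 : (0 : R) < 2 * t - 1 by lra.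
  have [N _ HN] := (cvgrPdist_lt _ _).1 cc _ e0.
  have {HN} HN := HN N (leqnn N); rewrite /= in HN.
  have HN' : 1 - series c N < 2 * t - 1 by apply: le_lt_trans HN; exact: ler_norm.
  set s := t - (1 - series c N).
  apply: (@le_trans _ _ (P [set w | s <= series (fun i => c i * (beta i w)%:R) N])).
    apply: le_measure; rewrite ?inE.
    - exact: (mS hi c t hc).
    - exact: Mevent hi _ _ _.
    move=> w /= hw; have := S_le beta c w N hc; rewrite /s; lra.
  rewrite (Pevent hi) lee_fin; apply: gf_bound => //.
  - by move=> x /mapP [i _ ->]; apply: c0.
  - have -> : \sum_(x <- mkseq c N) x = series c N.
      by rewrite seriesEnat /= /mkseq big_map /index_iota subn0.
    rewrite /s; lra.
  - by rewrite /s; lra.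
apply: ereal_sup_ubound; exists (@bold R); first exact: bold_stake.
rewrite (_ : [set w | t <= S_gamma beta bold w] = [set w | beta 0%N w]) ?h2 //.
apply/seteqP; split => w /=; rewrite bold_S; case: (beta 0%N w) => //=; lra.
Qed.
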